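(* Let $F\subseteq\mathbb{R}^2$ be self-homothetic, generated by an IFS $\Phi$ with uniform contraction ratio $\lambda$ and the SSC, and not contained in an affine line. Suppose that $\gamma\cdot(P_1(F),0)+t\subseteq F$ for some $\gamma>0$, $t\in\mathbb{R}^2$. Then the projected IFS $P_1\Phi$ has the weak separation condition.
   Context: Self-homothetic: $\Phi=\{\phi_i(z)=\lambda z+t_i\}$. SSC: $\phi_i(F)$ pairwise disjoint. $P_1(x,y)=x$; $(A,0)=\{(a,0):a\in A\}$. $P_1\Phi=\{x\mapsto\lambda x+P_1(t_i)\}$, an IFS on $\mathbb{R}$ with attractor $P_1(F)$. WSC: $\mathrm{Id}\notin\overline{\{\psi_I^{-1}\circ\psi_J: I\ne J\}\setminus\{\mathrm{Id}\}}$, closure with respect to pointwise convergence on the group of similarities of $\mathbb{R}$. *)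

(* Defs.v *)
From Stdlib Require Import Reals List.
Import ListNotations.
Open Scope R_scope.

(* Points of R^2 are pairs. A self-homothetic IFS on R^2 with uniform ratio
   lam is given by lam and the list of translations ts:
   phi_i(z) = lam * z + t_i. *)
Definition phi2 (lam : R) (ts : list (R * R)) (i : nat) (z : R * R) : R * R :=
  let t := nth i ts (0, 0) in
  (lam * fst z + fst t, lam * snd z + snd t).

Definition bounded2 (F : R * R -> Prop) : Prop :=
  exists M : R, forall z, F z -> Rabs (fst z) <= M /\ Rabs (snd z) <= M.

Definition closed2 (F : R * R -> Prop) : Prop :=
  forall z : R * R,
    (forall eps : R, 0 < eps ->
       exists w, F w /\ Rabs (fst w - fst z) < eps /\ Rabs (snd w - snd z) < eps) ->
    F z.

Definition is_attractor2 (lam : R) (ts : list (R * R)) (F : R * R -> Prop) : Prop :=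
  (exists z, F z) /\ bounded2 F /\ closed2 F /\
  (forall z, F z <-> exists i, (i < length ts)%nat /\ exists w, F w /\ z = phi2 lam ts i w).

Definition SSC2 (lam : R) (ts : list (R * R)) (F : R * R -> Prop) : Prop :=
  forall i j : nat, (i < length ts)%nat -> (j < length ts)%nat -> i <> j ->
    forall w w', F w -> F w' -> phi2 lam ts i w <> phi2 lam ts j w'.

Definition in_affine_line (F : R * R -> Prop) : Prop :=
  exists a b c : R, (a <> 0 \/ b <> 0) /\ forall z, F z -> a * fst z + b * snd z = c.

Definition psi1 (lam : R) (ts : list (R * R)) (i : nat) (x : R) : R :=
  lam * x + fst (nth i ts (0, 0)).

Definition is_word (ts : list (R * R)) (w : list nat) : Prop :=
  Forall (fun i => (i < length ts)%nat) w.

Definition psi_word (lam : R) (ts : list (R * R)) (w : list nat) (x : R) : R :=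
  fold_right (fun i acc => psi1 lam ts i acc) x w.

(* g = psi_I^{-1} o psi_J, characterized by psi_I o g = psi_J
   (psi_I is a bijection of R when lam <> 0). *)
Definition is_relative_map (lam : R) (ts : list (R * R)) (I J : list nat) (g : R -> R) : Prop :=
  forall x, psi_word lam ts I (g x) = psi_word lam ts J x.

(* Weak separation condition for P_1 Phi:
   Id is not in the closure, for the topology of pointwise convergence,
   of { psi_I^{-1} o psi_J : I <> J } \ {Id}.
   A basic pointwise neighbourhood of Id is given by finitely many points xs
   and eps > 0. *)
Definition WSC1 (lam : R) (ts : list (R * R)) : Prop :=
  ~ (forall (xs : list R) (eps : R), 0 < eps ->
       exists (I J : list nat) (g : R -> R),
         is_word ts I /\ is_word ts J /\ I <> J /\
         is_relative_map lam ts I J g /\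
         (exists x, g x <> x) /\
         (forall x, In x xs -> Rabs (g x - x) < eps)).

(* Main.v *)
Require Import Defs.
From Stdlib Require Import Reals List Lra Lia Psatz Classical ClassicalEpsilon.
Import ListNotations.
Open Scope R_scope.

Lemma psi_word_app lam ts A B x :
  psi_word lam ts (A ++ B) x = psi_word lam ts A (psi_word lam ts B x).
Proof. unfold psi_word. now rewrite fold_right_app. Qed.

Lemma psi_word_aff lam ts I x y :
  psi_word lam ts I (x + y) = psi_word lam ts I x + lam ^ (length I) * y.
Proof.
  induction I as [|i I IH]; simpl.
  - ring.
  - change (psi1 lam ts i (psi_word lam ts I (x+y)) =
            psi1 lam ts i (psi_word lam ts I x) + lam * lam ^ length I * y).
    rewrite IH. unfold psi1. ring.
Qed.

Definition KK (F : R * R -> Prop) (x : R) : Prop := exists y, F (x, y).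

Lemma F_step lam ts F (HF : is_attractor2 lam ts F) i w :
  (i < length ts)%nat -> F w -> F (phi2 lam ts i w).
Proof.
  intros Hi Hw. destruct HF as (_ & _ & _ & H). apply H. exists i. split; auto. exists w; auto.
Qed.

Lemma K_closed lam ts F (HF : is_attractor2 lam ts F) I x :
  is_word ts I -> KK F x -> KK F (psi_word lam ts I x).
Proof.
  induction I as [|i I IH]; intros HI Hx; simpl; auto.
  inversion HI; subst. destruct (IH H2 Hx) as [y Hy].
  exists (lam * y + snd (nth i ts (0,0))).
  pose proof (F_step lam ts F HF i _ H1 Hy) as Hs. unfold phi2 in Hs. simpl in Hs.
  unfold psi1. exact Hs.
Qed.

Definition Good lam ts F (S : R -> Prop) (p : nat) : Prop :=
  exists I, is_word ts I /\ length I = p /\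
    forall s x, S s -> KK F x -> KK F (psi_word lam ts I (x + s)).

Lemma Good_comp lam ts F S2 S1 p q :
  lam <> 0 ->
  Good lam ts F S2 p -> Good lam ts F S1 q ->
  Good lam ts F (fun y => exists s s1, S2 s /\ S1 s1 /\ y = s + s1 / lam ^ p) (q + p).
Proof.
  intros Hl (I2 & HI2 & Hl2 & H2) (I1 & HI1 & Hl1 & H1).
  exists (I1 ++ I2). split; [apply Forall_app; auto|]. split; [rewrite length_app; lia|].
  intros y x (s & s1 & Hs & Hs1 & ->) Hx.
  rewrite psi_word_app.
  replace (x + (s + s1 / lam ^ p)) with ((x + s) + s1 / lam ^ p) by ring.
  rewrite psi_word_aff, Hl2.
  replace (lam ^ p * (s1 / lam ^ p)) with s1 by (field; apply pow_nonzero; auto).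
  apply H1; auto.
Qed.

Lemma pow_le1 x n : 0 <= x <= 1 -> 0 <= x ^ n <= 1.
Proof.
  intros H. induction n; simpl; [lra|]. split; [apply Rmult_le_pos; lra|].
  destruct IHn. nra.
Qed.

Lemma abs_pow_le lam k : Rabs lam < 1 -> (1 <= k)%nat -> Rabs (lam ^ k) <= Rabs lam.
Proof.
  intros Hl Hk. destruct k as [|k]; [lia|]. simpl. rewrite Rabs_mult.
  rewrite <- RPow_abs.
  assert (0 <= Rabs lam) by apply Rabs_pos.
  destruct (pow_le1 (Rabs lam) k) as [A B]; [lra|]. nra.
Qed.

Lemma small_beta lam ts F (HF : is_attractor2 lam ts F) (Hlam : 0 < Rabs lam < 1)
  (H : forall (xs : list R) (eps : R), 0 < eps ->
       exists (I J : list nat) (g : R -> R),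
         is_word ts I /\ is_word ts J /\ I <> J /\
         is_relative_map lam ts I J g /\
         (exists x, g x <> x) /\
         (forall x, In x xs -> Rabs (g x - x) < eps)) :
  forall eps, 0 < eps -> exists beta q, 0 < Rabs beta < eps /\
    Good lam ts F (fun y => y = 0 \/ y = beta) q /\
    Good lam ts F (fun y => y = 0 \/ y = - beta) q.
Proof.
  intros eps Heps.
  set (e := Rmin eps ((1 - Rabs lam) / 2)).
  assert (He : 0 < e) by (unfold e; apply Rmin_glb_lt; lra).
  assert (He1 : e <= eps) by apply Rmin_l.
  assert (He2 : e <= (1 - Rabs lam) / 2) by apply Rmin_r.
  destruct (H [0; 1] e He) as (I & J & g & HI & HJ & _ & Hrel & [x0 Hx0] & Hc).
  assert (H0 := Hc 0 ltac:(simpl; auto)).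
  assert (H1 := Hc 1 ltac:(simpl; auto)).
  assert (Hl0 : lam <> 0) by (intro Z; rewrite Z, Rabs_R0 in Hlam; lra).
  set (a := length I) in *. set (b := length J) in *.
  set (cI := psi_word lam ts I 0). set (cJ := psi_word lam ts J 0).
  assert (Hg : forall x, cI + lam ^ a * g x = cJ + lam ^ b * x).
  { intro x. pose proof (Hrel x) as R.
    rewrite <- (Rplus_0_l (g x)), <- (Rplus_0_l x) in R.
    rewrite !psi_word_aff in R. rewrite !Rplus_0_l in R. exact R. }
  assert (Hd : lam ^ a * (g 1 - g 0) = lam ^ b).
  { pose proof (Hg 1). pose proof (Hg 0). nra. }
  assert (Hgg : Rabs (g 1 - g 0 - 1) < 1 - Rabs lam).
  { rewrite Rminus_0_r in H0.
    replace (g 1 - g 0 - 1) with ((g 1 - 1) - g 0) by ring.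
    eapply Rle_lt_trans; [apply Rabs_triang|]. rewrite Rabs_Ropp. lra. }
  assert (Hab : a = b).
  { destruct (Nat.lt_trichotomy a b) as [Hlt|[Heq|Hgt]]; auto; exfalso.
    - replace b with (a + (b - a))%nat in Hd by lia. rewrite pow_add in Hd.
      assert (E : g 1 - g 0 = lam ^ (b - a)).
      { apply (Rmult_eq_reg_l (lam ^ a)); [lra|apply pow_nonzero; auto]. }
      pose proof (abs_pow_le lam (b - a) ltac:(lra) ltac:(lia)).
      rewrite <- E in H2.
      revert Hgg H2. generalize (g 1 - g 0). intros r A B.
      apply Rabs_def2 in A. destruct A. 
      assert (Rabs r >= r) by (apply Rle_ge, RRle_abs). lra.
    - replace a with (b + (a - b))%nat in Hd by lia. rewrite pow_add in Hd.
      assert (E : lam ^ (a - b) * (g 1 - g 0) = 1).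
      { apply (Rmult_eq_reg_l (lam ^ b)); [|apply pow_nonzero; auto]. lra. }
      pose proof (abs_pow_le lam (a - b) ltac:(lra) ltac:(lia)).
      assert (E2 : Rabs (lam ^ (a - b)) * Rabs (g 1 - g 0) = 1)
        by (rewrite <- Rabs_mult, E; apply Rabs_R1).
      revert Hgg H2 E2. generalize (g 1 - g 0) (lam ^ (a - b)). intros r u A B C.
      apply Rabs_def2 in A. destruct A.
      assert (Rabs r <= 2 - Rabs lam).
      { unfold Rabs at 1; destruct (Rcase_abs r); lra. }
      assert (0 <= Rabs r) by apply Rabs_pos. assert (0 <= Rabs u) by apply Rabs_pos.
      nra. }
  assert (Hgx : forall x, g x = x + g 0).
  { intro x. pose proof (Hg x). pose proof (Hg 0). rewrite <- Hab in *.
    assert (lam ^ a <> 0) by (apply pow_nonzero; auto).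
    apply (Rmult_eq_reg_l (lam ^ a)); auto. nra. }
  exists (g 0), a. split; [split|split].
  - apply Rabs_pos_lt. intro Z. apply Hx0. rewrite Hgx, Z. ring.
  - rewrite Rminus_0_r in H0. lra.
  - exists I. split; auto. split; auto. intros s x [-> | ->] Hx.
    + rewrite Rplus_0_r. apply K_closed; auto.
    + rewrite psi_word_aff. fold a.
      replace (psi_word lam ts I x + lam ^ a * g 0) with (psi_word lam ts J x).
      * apply K_closed; auto.
      * rewrite <- (Rplus_0_l x), !psi_word_aff, ?Rplus_0_l. fold cI cJ. fold a b.
        pose proof (Hg 0). rewrite <- Hab in *. nra.
  - exists J. split; auto. split; [auto|]. intros s x [-> | ->] Hx.
    + rewrite Rplus_0_r. apply K_closed; auto.
    + rewrite psi_word_aff. fold b.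
      replace (psi_word lam ts J x + lam ^ b * - g 0) with (psi_word lam ts I x).
      * apply K_closed; auto.
      * rewrite <- (Rplus_0_l x), !psi_word_aff, ?Rplus_0_l. fold cI cJ. fold a b.
        pose proof (Hg 0). rewrite <- Hab in *. nra.
Qed.

Definition Dense (S : R -> Prop) (a L : R) : Prop :=
  forall y, a <= y <= a + L -> exists s, S s /\ Rabs (y - s) <= 1.

Lemma transition (P : nat -> Prop) : P 0%nat -> (exists n, ~ P n) -> exists m, P m /\ ~ P (S m).
Proof.
  intros H0 [n Hn]. apply NNPP. intro C. apply Hn. clear Hn.
  induction n; auto. apply NNPP. intro D. apply C. exists n. auto.
Qed.

Lemma dense_double S S' a L b lam :
  Dense S a L -> 0 < b <= L -> L * Rabs lam < b ->
  (forall s, S s -> S' s) -> (forall s, S s -> S' (s + b)) ->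
  Dense S' a (L * (1 + Rabs lam)).
Proof.
  intros HD Hb Hb2 H1 H2 y Hy.
  destruct (Rle_or_lt y (a + L)) as [Hle|Hgt].
  - destruct (HD y ltac:(lra)) as (s & Hs & Hd). exists s; auto.
  - destruct (HD (y - b) ltac:(lra)) as (s & Hs & Hd). exists (s + b). split; auto.
    replace (y - (s + b)) with (y - b - s) by ring. auto.
Qed.

Lemma Good_zero lam ts F (HF : is_attractor2 lam ts F) (Hne : (0 < length ts)%nat) k :
  Good lam ts F (fun y => y = 0) k.
Proof.
  exists (repeat 0%nat k). split; [|split].
  - apply Forall_forall. intros x Hx. apply repeat_spec in Hx. subst. auto.
  - apply repeat_length.
  - intros s x -> Hx. rewrite Rplus_0_r. apply K_closed; auto.
    apply Forall_forall. intros z Hz. apply repeat_spec in Hz. subst. auto.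
Qed.

Lemma doubling lam ts F (HF : is_attractor2 lam ts F) (Hlam : 0 < Rabs lam < 1)
  (Hne : (0 < length ts)%nat)
  (Hb : forall eps, 0 < eps -> exists beta q, 0 < Rabs beta < eps /\
    Good lam ts F (fun y => y = 0 \/ y = beta) q /\
    Good lam ts F (fun y => y = 0 \/ y = - beta) q)
  S p a L : Good lam ts F S p -> Dense S a L -> 0 < L ->
  exists S' p', Good lam ts F S' p' /\ Dense S' a (L * (1 + Rabs lam)).
Proof.
  intros HG HD HL.
  assert (Hl0 : lam <> 0) by (intro Z; rewrite Z, Rabs_R0 in Hlam; lra).
  assert (Hp : 0 < Rabs lam ^ p) by (apply pow_lt; lra).
  destruct (Hb (L * Rabs lam ^ p) ltac:(nra)) as (beta & q & Hbeta & Gp & Gm).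
  destruct (transition (fun k => Rabs beta <= L * Rabs lam ^ p * Rabs lam ^ k))
    as (k & Pk & nPk).
  { simpl. lra. }
  { destruct (pow_lt_1_zero (Rabs lam) ltac:(rewrite Rabs_Rabsolu; lra)
       (Rabs beta / (L * Rabs lam ^ p))) as [N HN].
    { apply Rdiv_lt_0_compat; nra. }
    exists N. specialize (HN N (le_n _)). rewrite Rabs_pos_eq in HN by (apply pow_le; apply Rabs_pos).
    apply Rlt_not_le. apply (Rmult_lt_compat_l (L * Rabs lam ^ p)) in HN; [|nra].
    replace (L * Rabs lam ^ p * (Rabs beta / (L * Rabs lam ^ p))) with (Rabs beta) in HN
      by (field; nra). lra. }
  simpl in nPk.
  assert (Hk : 0 < Rabs lam ^ k) by (apply pow_lt; lra).
  set (c := beta / lam ^ k / lam ^ p).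
  assert (Hc : Rabs c * (Rabs lam ^ p * Rabs lam ^ k) = Rabs beta).
  { unfold c. rewrite !RPow_abs, <- !Rabs_mult. f_equal. field.
    split; apply pow_nonzero; auto. }
  assert (Hc1 : Rabs c <= L) by nra.
  assert (Hc2 : L * Rabs lam < Rabs c) by nra.
  assert (HLl : 0 < L * Rabs lam) by nra.
  destruct (Rle_or_lt 0 c) as [Hcp|Hcn].
  - pose proof (Good_comp lam ts F _ _ _ _ Hl0 (Good_zero lam ts F HF Hne k) Gp) as G1.
    pose proof (Good_comp lam ts F _ _ _ _ Hl0 HG G1) as G2.
    eexists; eexists; split; [exact G2|].
    rewrite (Rabs_pos_eq c) in Hc1, Hc2 by exact Hcp.
    apply (dense_double S _ a L c lam HD ltac:(lra) Hc2).
    + intros s Hs. exists s, 0. split; auto. split.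
      * exists 0, 0. split; auto. split; auto. unfold Rdiv. ring.
      * unfold Rdiv. ring.
    + intros s Hs. exists s, (beta / lam ^ k). split; auto. split; auto.
      exists 0, beta. split; auto. split; auto. ring.
  - pose proof (Good_comp lam ts F _ _ _ _ Hl0 (Good_zero lam ts F HF Hne k) Gm) as G1.
    pose proof (Good_comp lam ts F _ _ _ _ Hl0 HG G1) as G2.
    eexists; eexists; split; [exact G2|].
    rewrite (Rabs_left c) in Hc1, Hc2 by exact Hcn.
    apply (dense_double S _ a L (- c) lam HD ltac:(lra) Hc2).
    + intros s Hs. exists s, 0. split; auto. split.
      * exists 0, 0. split; auto. split; auto. unfold Rdiv. ring.
      * unfold Rdiv. ring.
    + intros s Hs. exists s, (- beta / lam ^ k). split; auto. split; auto.
      * exists 0, (- beta). split; auto. split; auto. ring.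
      * unfold c. unfold Rdiv. ring.
Qed.

Lemma iterate lam ts F (HF : is_attractor2 lam ts F) (Hlam : 0 < Rabs lam < 1)
  (Hne : (0 < length ts)%nat)
  (Hb : forall eps, 0 < eps -> exists beta q, 0 < Rabs beta < eps /\
    Good lam ts F (fun y => y = 0 \/ y = beta) q /\
    Good lam ts F (fun y => y = 0 \/ y = - beta) q) :
  forall n, exists S p, Good lam ts F S p /\ Dense S 0 (1 + INR n * Rabs lam).
Proof.
  induction n as [|n IH].
  - exists (fun y => y = 0), 0%nat. split.
    + exists nil. split; [constructor|]. split; auto. intros s x -> Hx. simpl. rewrite Rplus_0_r; auto.
    + intros y Hy. exists 0. split; auto. simpl in Hy. rewrite Rminus_0_r, Rabs_pos_eq; lra.
  - destruct IH as (S & p & HG & HD).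
    assert (0 <= INR n) by apply pos_INR.
    assert (0 < Rabs lam) by lra.
    destruct (doubling lam ts F HF Hlam Hne Hb S p 0 _ HG HD ltac:(nra)) as (S' & p' & HG' & HD').
    exists S', p'. split; auto. intros y Hy. apply HD'. rewrite S_INR in Hy. nra.
Qed.

Definition cvs (u : nat -> R) (l : R) : Prop :=
  forall eps, 0 < eps -> exists N, forall k, (N <= k)%nat -> Rabs (u k - l) < eps.

Lemma incr_ge (phi : nat -> nat) : (forall k, (phi k < phi (S k))%nat) -> forall k, (k <= phi k)%nat.
Proof. intros H k. induction k; [lia|]. specialize (H k). lia. Qed.

Lemma incr_mono (phi : nat -> nat) : (forall k, (phi k < phi (S k))%nat) ->
  forall a b, (a <= b)%nat -> (phi a <= phi b)%nat.
Proof. intros H a b Hab. induction Hab; auto. specialize (H m). lia. Qed.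

Lemma cv_sub v l rho : cvs v l -> (forall k, (rho k < rho (S k))%nat) ->
  cvs (fun k => v (rho k)) l.
Proof.
  intros H Hr eps He. destruct (H eps He) as [N HN]. exists N. intros k Hk.
  apply HN. pose proof (incr_ge rho Hr k). lia.
Qed.

Lemma inv_small eps : 0 < eps -> exists N : nat, forall k, (N <= k)%nat -> / (INR k + 1) < eps.
Proof.
  intros He. destruct (INR_unbounded (/ eps)) as [N HN]. exists N. intros k Hk.
  apply le_INR in Hk. assert (0 <= INR N) by apply pos_INR.
  assert (0 < / eps) by (apply Rinv_0_lt_compat; auto).
  rewrite <- (Rinv_inv eps). apply Rinv_lt_contravar; nra.
Qed.

Lemma subseq1 (u : nat -> R) M : (forall n, Rabs (u n) <= M) ->
  exists phi : nat -> nat, (forall k, (phi k < phi (S k))%nat) /\ exists l, cvs (fun k => u (phi k)) l.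
Proof.
  intros HM.
  destruct (Bolzano_Weierstrass u (fun c => - M <= c <= M) (compact_P3 _ _)) as [l Hl].
  { intro n. specialize (HM n). unfold Rabs in HM. destruct Rcase_abs; lra. }
  assert (step : forall (N k : nat), exists p, (N <= p)%nat /\ Rabs (u p - l) < / (INR k + 1)).
  { intros N k.
    assert (Hpos : 0 < / (INR k + 1)) by (apply Rinv_0_lt_compat; pose proof (pos_INR k); lra).
    destruct (Hl (disc l (mkposreal _ Hpos)) N) as (p & Hp & Hv).
    - exists (mkposreal _ Hpos). unfold included; auto.
    - exists p. split; auto. }
  pose (f := fun N k => proj1_sig (constructive_indefinite_description _ (step N k))).
  assert (Hf : forall N k, (N <= f N k)%nat /\ Rabs (u (f N k) - l) < / (INR k + 1)).
  { intros N k. unfold f. destruct constructive_indefinite_description; simpl; auto. }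
  pose (phi := fix phi (k : nat) : nat := match k with 0%nat => f 0%nat 0%nat | S k' => f (S (phi k')) (S k') end).
  exists phi. split.
  - intro k. simpl. destruct (Hf (S (phi k)) (S k)). lia.
  - exists l. intros eps He. destruct (inv_small eps He) as [N HN]. exists N. intros k Hk.
    eapply Rlt_trans; [|apply (HN k Hk)].
    destruct k; simpl; apply Hf.
Qed.

Lemma multi (us : list (nat -> R)) M : (forall u, In u us -> forall n, Rabs (u n) <= M) ->
  exists phi : nat -> nat, (forall k, (phi k < phi (S k))%nat) /\
    forall u, In u us -> exists l, cvs (fun k => u (phi k)) l.
Proof.
  induction us as [|u us IH]; intros HM.
  - exists (fun k => k). split; [intros; lia|]. intros u [].
  - destruct IH as (phi & Hphi & Hc). { intros v Hv. apply HM. right; auto. }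
    destruct (subseq1 (fun k => u (phi k)) M) as (rho & Hrho & l & Hl).
    { intro n. apply HM. left; auto. }
    exists (fun k => phi (rho k)). split.
    + intro k. specialize (Hrho k). pose proof (incr_mono phi Hphi (S (rho k)) (rho (S k)) Hrho).
      specialize (Hphi (rho k)). lia.
    + intros v [<-|Hv].
      * exists l. exact Hl.
      * destruct (Hc v Hv) as [l' Hl']. exists l'.
        exact (cv_sub (fun k => v (phi k)) l' rho Hl' Hrho).
Qed.

Lemma INR_close a b : Rabs (INR a - INR b) < 1 -> a = b.
Proof.
  intro H. destruct (Nat.lt_trichotomy a b) as [Hab|[E|Hab]]; auto; exfalso.
  - apply le_INR in Hab. rewrite S_INR in Hab. rewrite Rabs_minus_sym, Rabs_pos_eq in H; lra.
  - apply le_INR in Hab. rewrite S_INR in Hab. rewrite Rabs_pos_eq in H; lra.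
Qed.

Lemma zero_small x : (forall eps, 0 < eps -> Rabs x < eps) -> x = 0.
Proof.
  intro H. destruct (Req_dec x 0); auto. exfalso.
  specialize (H (Rabs x) (Rabs_pos_lt _ H0)). lra.
Qed.

Lemma sep lam ts F (HF : is_attractor2 lam ts F) (Hlam : 0 < Rabs lam < 1) (Hssc : SSC2 lam ts F) :
  exists d, 0 < d /\ forall i j w w', (i < length ts)%nat -> (j < length ts)%nat -> i <> j ->
    F w -> F w' ->
    ~ (Rabs (fst (phi2 lam ts i w) - fst (phi2 lam ts j w')) < d /\
       Rabs (snd (phi2 lam ts i w) - snd (phi2 lam ts j w')) < d).
Proof.
  apply NNPP; intro C.
  pose (P := fun (n : nat) (q : (nat * nat) * ((R * R) * (R * R))) =>
    (fst (fst q) < length ts)%nat /\ (snd (fst q) < length ts)%nat /\ fst (fst q) <> snd (fst q) /\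
    F (fst (snd q)) /\ F (snd (snd q)) /\
    Rabs (fst (phi2 lam ts (fst (fst q)) (fst (snd q))) - fst (phi2 lam ts (snd (fst q)) (snd (snd q)))) < / (INR n + 1) /\
    Rabs (snd (phi2 lam ts (fst (fst q)) (fst (snd q))) - snd (phi2 lam ts (snd (fst q)) (snd (snd q)))) < / (INR n + 1)).
  assert (H : forall n, exists q, P n q).
  { intro n. apply NNPP; intro D. apply C. exists (/ (INR n + 1)). split.
    { apply Rinv_0_lt_compat. pose proof (pos_INR n); lra. }
    intros i j w w' Hi Hj Hij Hw Hw' Hb. apply D. exists ((i, j), (w, w')).
    unfold P; simpl. tauto. }
  pose (Q := fun n => proj1_sig (constructive_indefinite_description _ (H n))).
  assert (HQ : forall n, P n (Q n)).
  { intro n. unfold Q. destruct constructive_indefinite_description; simpl; auto. }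
  destruct HF as (_ & [B HB] & Hcl & Hatt).
  set (Ii := fun n => fst (fst (Q n))). set (Jj := fun n => snd (fst (Q n))).
  set (W := fun n => fst (snd (Q n))). set (W' := fun n => snd (snd (Q n))).
  assert (HW : forall n, F (W n)) by (intro n; apply (HQ n)).
  assert (HW' : forall n, F (W' n)) by (intro n; apply (HQ n)).
  set (M := Rmax B (INR (length ts))).
  destruct (multi [fun n => INR (Ii n); fun n => INR (Jj n);
                   fun n => fst (W n); fun n => snd (W n);
                   fun n => fst (W' n); fun n => snd (W' n)] M) as (phi & Hphi & Hcv).
  { intros u Hu n. simpl in Hu.
    assert (HM1 : B <= M) by apply Rmax_l. assert (HM2 : INR (length ts) <= M) by apply Rmax_r.
    destruct (HQ n) as (Hi & Hj & _).
    destruct Hu as [<-|[<-|[<-|[<-|[<-|[<-|[]]]]]]]; simpl.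
    - rewrite Rabs_pos_eq by apply pos_INR. apply lt_INR in Hi. unfold Ii. lra.
    - rewrite Rabs_pos_eq by apply pos_INR. apply lt_INR in Hj. unfold Jj. lra.
    - destruct (HB _ (HW n)); lra.
    - destruct (HB _ (HW n)); lra.
    - destruct (HB _ (HW' n)); lra.
    - destruct (HB _ (HW' n)); lra. }
  destruct (Hcv (fun n => INR (Ii n)) ltac:(simpl; tauto)) as [l1 C1].
  destruct (Hcv (fun n => INR (Jj n)) ltac:(simpl; tauto)) as [l2 C2].
  destruct (Hcv (fun n => fst (W n)) ltac:(simpl; tauto)) as [l3 C3].
  destruct (Hcv (fun n => snd (W n)) ltac:(simpl; tauto)) as [l4 C4].
  destruct (Hcv (fun n => fst (W' n)) ltac:(simpl; tauto)) as [l5 C5].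
  destruct (Hcv (fun n => snd (W' n)) ltac:(simpl; tauto)) as [l6 C6].
  simpl in C1, C2, C3, C4, C5, C6.
  destruct (C1 (/2) ltac:(lra)) as [N1 HN1].
  destruct (C2 (/2) ltac:(lra)) as [N2 HN2].
  set (N0 := Nat.max N1 N2).
  assert (HN0 : (N1 <= N0)%nat /\ (N2 <= N0)%nat) by (split; [apply Nat.le_max_l|apply Nat.le_max_r]).
  clearbody N0.
  assert (HI : forall k, (N0 <= k)%nat -> Ii (phi k) = Ii (phi N0)).
  { intros k Hk. apply INR_close.
    assert (A := HN1 k ltac:(lia)). assert (B0 := HN1 N0 ltac:(lia)).
    apply Rabs_def2 in A, B0. apply Rabs_def1; lra. }
  assert (HJ : forall k, (N0 <= k)%nat -> Jj (phi k) = Jj (phi N0)).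
  { intros k Hk. apply INR_close.
    assert (A := HN2 k ltac:(lia)). assert (B0 := HN2 N0 ltac:(lia)).
    apply Rabs_def2 in A, B0. apply Rabs_def1; lra. }
  set (i0 := Ii (phi N0)). set (j0 := Jj (phi N0)).
  assert (Hw : F (l3, l4)).
  { apply Hcl. intros eps He. destruct (C3 eps He) as [a Ha]. destruct (C4 eps He) as [b Hb].
    exists (W (phi (Nat.max a b))). split; auto. simpl. split; [apply Ha|apply Hb]; lia. }
  assert (Hw' : F (l5, l6)).
  { apply Hcl. intros eps He. destruct (C5 eps He) as [a Ha]. destruct (C6 eps He) as [b Hb].
    exists (W' (phi (Nat.max a b))). split; auto. simpl. split; [apply Ha|apply Hb]; lia. }
  destruct (HQ (phi N0)) as (Hi0 & Hj0 & Hij0 & _).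
  apply (Hssc i0 j0 Hi0 Hj0 Hij0 (l3, l4) (l5, l6) Hw Hw').
  assert (Hl : Rabs lam <= 1) by lra.
  apply injective_projections; apply Rminus_diag_uniq; apply zero_small; intros eps He.
  - destruct (C3 (eps/3) ltac:(lra)) as [a Ha]. destruct (C5 (eps/3) ltac:(lra)) as [b Hb].
    destruct (inv_small (eps/3) ltac:(lra)) as [c Hc].
    set (k := Nat.max N0 (Nat.max a (Nat.max b c))).
    assert (E1 := Ha k ltac:(lia)). assert (E2 := Hb k ltac:(lia)).
    assert (E3 := Hc (phi k) ltac:(pose proof (incr_ge phi Hphi k); lia)).
    destruct (HQ (phi k)) as (_ & _ & _ & _ & _ & D1 & _).
    fold (Ii (phi k)) (Jj (phi k)) (W (phi k)) (W' (phi k)) in D1.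
    rewrite (HI k), (HJ k) in D1 by lia. fold i0 j0 in D1.
    unfold phi2 in *. simpl in *.
    replace (lam * l3 + fst (nth i0 ts (0, 0)) - (lam * l5 + fst (nth j0 ts (0, 0))))
      with (lam * (l3 - fst (W (phi k))) +
            ((lam * fst (W (phi k)) + fst (nth i0 ts (0, 0))) - (lam * fst (W' (phi k)) + fst (nth j0 ts (0, 0))))
            + lam * (fst (W' (phi k)) - l5)) by ring.
    eapply Rle_lt_trans; [apply Rabs_triang|].
    eapply Rle_lt_trans; [apply Rplus_le_compat_r; apply Rabs_triang|].
    rewrite !Rabs_mult.
    rewrite Rabs_minus_sym in E1.
    assert (0 <= Rabs lam) by apply Rabs_pos.
    assert (0 <= Rabs (l3 - fst (W (phi k)))) by apply Rabs_pos.
    assert (0 <= Rabs (fst (W' (phi k)) - l5)) by apply Rabs_pos.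
    nra.
  - destruct (C4 (eps/3) ltac:(lra)) as [a Ha]. destruct (C6 (eps/3) ltac:(lra)) as [b Hb].
    destruct (inv_small (eps/3) ltac:(lra)) as [c Hc].
    set (k := Nat.max N0 (Nat.max a (Nat.max b c))).
    assert (E1 := Ha k ltac:(lia)). assert (E2 := Hb k ltac:(lia)).
    assert (E3 := Hc (phi k) ltac:(pose proof (incr_ge phi Hphi k); lia)).
    destruct (HQ (phi k)) as (_ & _ & _ & _ & _ & _ & D1).
    fold (Ii (phi k)) (Jj (phi k)) (W (phi k)) (W' (phi k)) in D1.
    rewrite (HI k), (HJ k) in D1 by lia. fold i0 j0 in D1.
    unfold phi2 in *. simpl in *.
    replace (lam * l4 + snd (nth i0 ts (0, 0)) - (lam * l6 + snd (nth j0 ts (0, 0))))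
      with (lam * (l4 - snd (W (phi k))) +
            ((lam * snd (W (phi k)) + snd (nth i0 ts (0, 0))) - (lam * snd (W' (phi k)) + snd (nth j0 ts (0, 0))))
            + lam * (snd (W' (phi k)) - l6)) by ring.
    eapply Rle_lt_trans; [apply Rabs_triang|].
    eapply Rle_lt_trans; [apply Rplus_le_compat_r; apply Rabs_triang|].
    rewrite !Rabs_mult.
    rewrite Rabs_minus_sym in E1.
    assert (0 <= Rabs lam) by apply Rabs_pos.
    assert (0 <= Rabs (l4 - snd (W (phi k)))) by apply Rabs_pos.
    assert (0 <= Rabs (snd (W' (phi k)) - l6)) by apply Rabs_pos.
    nra.
Qed.

Definition Phi lam ts (M : list nat) (z : R * R) : R * R :=
  fold_right (fun i acc => phi2 lam ts i acc) z M.

Lemma fst_Phi lam ts M z : fst (Phi lam ts M z) = psi_word lam ts M (fst z).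
Proof.
  induction M as [|i M IH]; simpl; auto.
  change (fst (phi2 lam ts i (Phi lam ts M z)) = psi1 lam ts i (psi_word lam ts M (fst z))).
  rewrite <- IH. unfold phi2, psi1. simpl. auto.
Qed.

Lemma Phi_F lam ts F (HF : is_attractor2 lam ts F) M z :
  is_word ts M -> F z -> F (Phi lam ts M z).
Proof.
  induction M as [|i M IH]; intros HM Hz; simpl; auto.
  inversion HM; subst. apply F_step; auto.
Qed.

Lemma phi2_inj lam ts i a b : lam <> 0 -> phi2 lam ts i a = phi2 lam ts i b -> a = b.
Proof.
  intros Hl E. unfold phi2 in E. injection E as E1 E2.
  apply injective_projections.
  - apply (Rmult_eq_reg_l lam); auto. lra.
  - apply (Rmult_eq_reg_l lam); auto. lra.
Qed.

Lemma uniq_addr lam ts F (HF : is_attractor2 lam ts F) (Hl : lam <> 0) (Hssc : SSC2 lam ts F) :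
  forall M M' v v', length M = length M' -> is_word ts M -> is_word ts M' -> F v -> F v' ->
    Phi lam ts M v = Phi lam ts M' v' -> M = M'.
Proof.
  induction M as [|i M IH]; intros M' v v' Hlen HM HM' Hv Hv' E; destruct M' as [|i' M']; simpl in *; try lia; auto.
  inversion HM as [|? ? Hi HM1]; inversion HM' as [|? ? Hi' HM1']; subst.
  destruct (Nat.eq_dec i i') as [<-|Hne].
  - f_equal. apply (IH M' v v'); auto. eapply phi2_inj; eauto.
  - exfalso. apply (Hssc i i' Hi Hi' Hne (Phi lam ts M v) (Phi lam ts M' v')).
    + apply Phi_F; auto.
    + apply Phi_F; auto.
    + exact E.
Qed.

Lemma cyl lam ts F (HF : is_attractor2 lam ts F) (Hlam : 0 < Rabs lam < 1) d
  (Hd : forall i j w w', (i < length ts)%nat -> (j < length ts)%nat -> i <> j ->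
    F w -> F w' ->
    ~ (Rabs (fst (phi2 lam ts i w) - fst (phi2 lam ts j w')) < d /\
       Rabs (snd (phi2 lam ts i w) - snd (phi2 lam ts j w')) < d)) :
  forall m u u', F u -> F u' ->
    Rabs (fst u - fst u') < d * Rabs lam ^ m -> Rabs (snd u - snd u') < d * Rabs lam ^ m ->
    exists M v v', is_word ts M /\ length M = m /\ F v /\ F v' /\ u = Phi lam ts M v /\ u' = Phi lam ts M v'.
Proof.
  assert (Hl0 : lam <> 0) by (intro Z; rewrite Z, Rabs_R0 in Hlam; lra).
  assert (Hla : 0 < Rabs lam) by lra.
  induction m as [|m IH]; intros u u' Hu Hu' H1 H2.
  - exists nil, u, u'. repeat split; auto. constructor.
  - pose proof HF as (_ & _ & _ & Hatt).
    destruct (proj1 (Hatt u) Hu) as (i & Hi & w & Hw & ->).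
    destruct (proj1 (Hatt u') Hu') as (j & Hj & w' & Hw' & ->).
    assert (Hp : Rabs lam ^ S m <= 1).
    { apply pow_le1. split; [apply Rabs_pos|lra]. }
    assert (Hdpos : 0 <= d).
    { pose proof (Rabs_pos (fst (phi2 lam ts i w) - fst (phi2 lam ts j w'))).
      assert (0 <= Rabs lam ^ S m) by (apply pow_le; apply Rabs_pos). nra. }
    destruct (Nat.eq_dec i j) as [<-|Hne].
    2:{ exfalso. apply (Hd i j w w' Hi Hj Hne Hw Hw'). split.
        - eapply Rlt_le_trans; [apply H1|]. pose proof (pow_le1 (Rabs lam) (S m)). nra.
        - eapply Rlt_le_trans; [apply H2|]. pose proof (pow_le1 (Rabs lam) (S m)). nra. }
    unfold phi2 in H1, H2; simpl in H1, H2.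
    replace (lam * fst w + fst (nth i ts (0, 0)) - (lam * fst w' + fst (nth i ts (0, 0))))
      with (lam * (fst w - fst w')) in H1 by ring.
    replace (lam * snd w + snd (nth i ts (0, 0)) - (lam * snd w' + snd (nth i ts (0, 0))))
      with (lam * (snd w - snd w')) in H2 by ring.
    rewrite Rabs_mult in H1, H2. simpl in H1, H2.
    destruct (IH w w' Hw Hw') as (M & v & v' & HM & HlM & Hv & Hv' & -> & ->).
    + nra.
    + nra.
    + exists (i :: M), v, v'. repeat split; auto. constructor; auto. simpl. lia.
Qed.

Lemma UD lam ts F (HF : is_attractor2 lam ts F) (Hlam : 0 < Rabs lam < 1) (Hssc : SSC2 lam ts F) :
  exists C, forall eta, 0 < eta -> forall (N : nat) Y e h, Rabs e <= eta ->
    (forall j, (j <= N)%nat -> exists z, F z /\ snd z = h /\ Rabs (fst z - (Y + INR j * e)) <= eta) ->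
    INR N * Rabs e <= C * eta.
Proof.
  assert (Hl0 : lam <> 0) by (intro Z; rewrite Z, Rabs_R0 in Hlam; lra).
  assert (Hla : 0 < Rabs lam) by lra.
  destruct (sep lam ts F HF Hlam Hssc) as (d & Hd & Hsep).
  pose proof HF as ([z00 Hz00] & [B HB] & _ & _).
  assert (HB0 : 0 <= B) by (destruct (HB z00 Hz00) as [A _]; pose proof (Rabs_pos (fst z00)); lra).
  set (K0 := B / (d * Rabs lam)).
  assert (HK0 : K0 * (d * Rabs lam) = B) by (unfold K0; field; lra).
  assert (HK0p : 0 <= K0) by (unfold K0; apply Rmult_le_pos; auto; left; apply Rinv_0_lt_compat; nra).
  exists (2 + 6 * K0). intros eta Heta N Y e h He Hch.
  assert (Hfar : forall z z', F z -> F z' -> Rabs (fst z - fst z') <= 2 * B).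
  { intros z z' Hz Hz'. destruct (HB z Hz), (HB z' Hz').
    eapply Rle_trans; [apply Rabs_triang|]. rewrite Rabs_Ropp. lra. }
  assert (Hlow : forall z z' : R * R, Rabs (fst z - (Y + INR N * e)) <= eta -> Rabs (fst z' - (Y + INR 0 * e)) <= eta ->
            INR N * Rabs e <= Rabs (fst z - fst z') + 2 * eta).
  { intros z z' A1 A2. simpl in A2.
    replace (INR N * Rabs e) with (Rabs (INR N * e)) by (rewrite Rabs_mult, Rabs_pos_eq; auto; apply pos_INR).
    replace (INR N * e) with ((fst z - fst z') - (fst z - (Y + INR N * e)) + (fst z' - (Y + 0 * e))) by ring.
    eapply Rle_trans; [apply Rabs_triang|].
    eapply Rle_trans; [apply Rplus_le_compat_r; apply Rabs_triang|]. rewrite Rabs_Ropp. lra. }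
  destruct (Rle_or_lt d (3 * eta)) as [Hbig|Hsmall].
  - destruct (Hch N (le_n _)) as (zN & HzN & _ & AN).
    destruct (Hch 0%nat ltac:(lia)) as (z0 & Hz0 & _ & A0).
    pose proof (Hlow zN z0 AN A0). pose proof (Hfar zN z0 HzN Hz0).
    assert (2 * B <= 6 * K0 * eta).
    { rewrite <- HK0. assert (d * Rabs lam <= 3 * eta) by nra. nra. }
    lra.
  - destruct (transition (fun m => 3 * eta < d * Rabs lam ^ m)) as (m & Pm & nPm).
    { simpl. lra. }
    { destruct (pow_lt_1_zero (Rabs lam) ltac:(rewrite Rabs_Rabsolu; lra) (3 * eta / d)) as [n Hn].
      { apply Rdiv_lt_0_compat; lra. }
      exists n. specialize (Hn n (le_n _)). rewrite Rabs_pos_eq in Hn by (apply pow_le; apply Rabs_pos).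
      apply Rle_not_lt. apply (Rmult_lt_compat_l d) in Hn; auto.
      replace (d * (3 * eta / d)) with (3 * eta) in Hn by (field; lra). lra. }
    simpl in nPm. apply Rnot_lt_le in nPm.
    destruct (Hch 0%nat ltac:(lia)) as (z0 & Hz0 & Hh0 & A0).
    destruct (cyl lam ts F HF Hlam d Hsep m z0 z0 Hz0 Hz0) as (M0 & v0 & v0' & HM0 & HlM0 & Hv0 & _ & E0 & _).
    { rewrite Rminus_diag, Rabs_R0. lra. }
    { rewrite Rminus_diag, Rabs_R0. lra. }
    assert (Claim : forall j, (j <= N)%nat -> exists z, F z /\ snd z = h /\
              Rabs (fst z - (Y + INR j * e)) <= eta /\ exists v, F v /\ z = Phi lam ts M0 v).
    { induction j as [|j IH]; intros Hj.
      - exists z0. repeat split; auto. exists v0; auto.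
      - destruct (IH ltac:(lia)) as (z & Hz & Hhz & Az & v & Hv & Ez).
        destruct (Hch (S j) Hj) as (z' & Hz' & Hhz' & Az').
        assert (D1 : Rabs (fst z' - fst z) < d * Rabs lam ^ m).
        { rewrite S_INR in Az'.
          replace (fst z' - fst z) with ((fst z' - (Y + (INR j + 1) * e)) - (fst z - (Y + INR j * e)) + e) by ring.
          eapply Rle_lt_trans; [apply Rabs_triang|].
          eapply Rle_lt_trans; [apply Rplus_le_compat_r; apply Rabs_triang|]. rewrite Rabs_Ropp. lra. }
        assert (D2 : Rabs (snd z' - snd z) < d * Rabs lam ^ m).
        { rewrite Hhz, Hhz', Rminus_diag, Rabs_R0. lra. }
        destruct (cyl lam ts F HF Hlam d Hsep m z' z Hz' Hz D1 D2) as (M & a & a' & HM & HlM & Ha & Ha' & Ea & Ea').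
        assert (M0 = M).
        { apply (uniq_addr lam ts F HF Hl0 Hssc M0 M v a'); auto; try lia. rewrite <- Ez, Ea'. auto. }
        subst M. exists z'. repeat split; auto. exists a; auto. }
    destruct (Claim N (le_n _)) as (zN & HzN & _ & AN & vN & HvN & EN).
    pose proof (Hlow zN z0 AN A0).
    assert (Hdiff : Rabs (fst zN - fst z0) <= Rabs lam ^ m * (2 * B)).
    { rewrite EN, E0, !fst_Phi.
      replace (fst vN) with (fst v0 + (fst vN - fst v0)) by ring.
      rewrite psi_word_aff. replace (psi_word lam ts M0 (fst v0) + lam ^ length M0 * (fst vN - fst v0) -
        psi_word lam ts M0 (fst v0)) with (lam ^ length M0 * (fst vN - fst v0)) by ring.
      rewrite Rabs_mult, <- RPow_abs, HlM0. apply Rmult_le_compat_l; [apply pow_le, Rabs_pos|].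
      apply (Hfar vN v0); auto. }
    assert (Rabs lam ^ m * (2 * B) <= 6 * K0 * eta).
    { rewrite <- HK0. assert (0 <= Rabs lam ^ m) by (apply pow_le, Rabs_pos). nra. }
    lra.
Qed.

Theorem lemma6p6 (lam : R) (ts : list (R * R)) (F : R * R -> Prop)
  (Hlam : 0 < Rabs lam < 1)
  (HF : is_attractor2 lam ts F)
  (Hssc : SSC2 lam ts F)
  (Hline : ~ in_affine_line F)
  (gamma : R) (t : R * R) (Hgamma : 0 < gamma)
  (Hsub : forall w, F w -> F (gamma * fst w + fst t, snd t)) :
  WSC1 lam ts.
Proof.
  unfold WSC1. intro H.
  assert (Hl0 : lam <> 0) by (intro Z; rewrite Z, Rabs_R0 in Hlam; lra).
  pose proof HF as ([[x0 y0] Hz0] & _ & _ & Hatt).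
  assert (Hne : (0 < length ts)%nat).
  { destruct (proj1 (Hatt _) Hz0) as (i & Hi & _). lia. }
  pose proof (small_beta lam ts F HF Hlam H) as Hb.
  destruct (UD lam ts F HF Hlam Hssc) as [C HC].
  destruct (INR_unbounded C) as [N HN].
  destruct (INR_unbounded (INR N / Rabs lam)) as [n Hn].
  destruct (iterate lam ts F HF Hlam Hne Hb n) as (S & p & (I & HI & HlI & HG) & HD).
  set (al := gamma * lam ^ p).
  assert (Hal : 0 < Rabs al).
  { apply Rabs_pos_lt. unfold al. apply Rmult_integral_contrapositive_currified; [lra|].
    apply pow_nonzero; auto. }
  assert (HnN : INR N <= INR n * Rabs lam).
  { assert (E : INR N = INR N / Rabs lam * Rabs lam) by (field; lra). rewrite E at 1.
    apply Rmult_le_compat_r; lra. }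
  pose proof (HC (Rabs al) Hal N (gamma * psi_word lam ts I x0 + fst t) al (snd t) (Rle_refl _)) as HC1.
  assert (INR N * Rabs al <= C * Rabs al).
  { apply HC1. intros j Hj.
    assert (Hj' : 0 <= INR j <= 0 + (1 + INR n * Rabs lam)).
    { split; [apply pos_INR|]. apply le_INR in Hj. lra. }
    destruct (HD (INR j) Hj') as (s & Hs & Hsj).
    destruct (HG s x0 Hs (ex_intro _ y0 Hz0)) as [y Hy].
    exists (gamma * psi_word lam ts I (x0 + s) + fst t, snd t). split; [|split].
    - exact (Hsub _ Hy).
    - reflexivity.
    - simpl. rewrite psi_word_aff, HlI.
      replace (gamma * (psi_word lam ts I x0 + lam ^ p * s) + fst t -
               (gamma * psi_word lam ts I x0 + fst t + INR j * al)) with (al * (s - INR j))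
        by (unfold al; ring).
      rewrite Rabs_mult, Rabs_minus_sym. assert (0 <= Rabs al) by apply Rabs_pos. nra. }
  nra.
Qed.
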